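(* Let $E_n$ ($n\geq1$) and $E_0$ be measurable subsets of $\mathbb{R}^d$ such that $|E_n\,\Delta\,E_0|\to 0$ and $d_H(\partial E_n,\partial E_0)\to 0$. Then also $d_H(E_n,E_0)\to0$.
   Context: $\partial E$ denotes the topological boundary of $E$; $|\cdot|$ is Lebesgue measure. $d_H(E,F)=\max\{\sup_{x\in E}\operatorname{dist}(x,F),\sup_{y\in F}\operatorname{dist}(y,E)\}$ is the Hausdorff distance. *)

(* Defs.v *)
From HB Require Import structures.
From mathcomp Require Import all_boot all_order all_algebra.
From mathcomp Require Import all_classical all_reals all_analysis.
Set Implicit Arguments. Unset Strict Implicit. Unset Printing Implicit Defensive.
Import Order.TTheory GRing.Theory Num.Theory.
Import numFieldNormedType.Exports.
Local Open Scope classical_set_scope.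
Local Open Scope ring_scope.

(* Points of R^d are row vectors 'rV[R]_d (topology = product topology,
   from matrix_normedtype). *)

Definition eucl {R : realType} {d : nat} (x y : 'rV[R]_d) : R :=
  Num.sqrt (\sum_(i < d) (x ord0 i - y ord0 i) ^+ 2).

Definition box {R : realType} {d : nat} (a b : 'rV[R]_d) : set 'rV[R]_d :=
  [set x | forall i, a ord0 i <= x ord0 i < b ord0 i].
Definition box_vol {R : realType} {d : nat} (a b : 'rV[R]_d) : R :=
  \prod_(i < d) (b ord0 i - a ord0 i).

Definition lebesgue_outer {R : realType} {d : nat} (A : set 'rV[R]_d) : \bar R :=
  ereal_inf [set s : \bar R | exists (a b : nat -> 'rV[R]_d),
    [/\ (forall k i, a k ord0 i <= b k ord0 i),
        A `<=` \bigcup_k box (a k) (b k) &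
        s = (\sum_(0 <= k <oo) (box_vol (a k) (b k))%:E)%E]].

Definition leb_measurable {R : realType} {d : nat} (A : set 'rV[R]_d) : Prop :=
  caratheodory_measurable (@lebesgue_outer R d) A.

Definition symdiff {T : Type} (A B : set T) : set T := (A `\` B) `|` (B `\` A).

Definition tboundary {R : realType} {d : nat} (E : set 'rV[R]_d) : set 'rV[R]_d :=
  closure E `\` interior E.

(* dist(x,F) = inf_{y in F} |x-y|  (= +oo if F is empty) *)
Definition edist {R : realType} {d : nat} (x : 'rV[R]_d) (F : set 'rV[R]_d) : \bar R :=
  ereal_inf [set (eucl x y)%:E | y in F].

(* Hausdorff distance in [0,+oo]; d_H(empty,empty) = 0, d_H(empty,F) = +oo
   for nonempty F *)
Definition hausdorff {R : realType} {d : nat} (E F : set 'rV[R]_d) : \bar R :=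
  maxe 0%E (maxe (ereal_sup [set edist x F | x in E])
                 (ereal_sup [set edist y E | y in F])).

(* Main.v *)
Require Import Defs.
From HB Require Import structures.
From mathcomp Require Import all_boot all_order all_algebra.
From mathcomp Require Import all_classical all_reals all_analysis.
From mathcomp Require Import measurable_realfun lebesgue_integral.
Import Order.TTheory GRing.Theory Num.Theory.
Import numFieldNormedType.Exports.
Local Open Scope classical_set_scope.
Local Open Scope ring_scope.
From mathcomp Require Import ring lra.
Section Cover.
Variable R : realType.
Local Open Scope ereal_scope.

Definition joinv {d : nat} (t : R) (y : 'I_d -> R) : 'I_d.+1 -> R :=
  fun j => match unlift ord0 j with None => t | Some i => y i end.

Lemma joinv0 d t (y : 'I_d -> R) : joinv t y ord0 = t.
Proof. by rewrite /joinv unlift_none. Qed.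
Lemma joinvS d t (y : 'I_d -> R) i : joinv t y (lift ord0 i) = y i.
Proof. by rewrite /joinv liftK. Qed.

Lemma gk_meas (w a b : R) : measurable_fun setT
  (fun t : R => ((w * \1_(`[a, b[%classic) t)%R)%:E).
Proof.
apply/measurable_EFinP; apply: measurable_funM => //=.
Qed.

Lemma gk_int (w a b : R) : (0 <= w)%R -> (a <= b)%R ->
  \int[@lebesgue_measure R]_(t in setT) ((w * \1_(`[a, b[%classic) t)%R)%:E
  = (w * (b - a))%:E.
Proof.
move=> w0 ab.
rewrite (@integralZl_indic _ _ _ (@lebesgue_measure R) setT measurableT (fun _ => `[a, b[%classic)) //; last first.
  by move=> w0'; exfalso; move: w0'; rewrite ltNge w0.
rewrite integral_indic // setIT.
have := lebesgue_measure_itv `[a, b[ => /= ->.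
rewrite lte_fin; have [ab'|] := ltP a b; first by rewrite -EFinD -EFinM.
move=> ba; have -> : b = a by apply/eqP; rewrite eq_le ab ba.
by rewrite subrr mulr0 mule0.

Qed.

Lemma cover_vol (d : nat) : forall (a b : 'I_d -> R) (A B : nat -> 'I_d -> R)
  (S : nat -> bool),
  (forall i, a i <= b i)%R -> (forall k i, A k i <= B k i)%R ->
  (forall x : 'I_d -> R, (forall i, a i <= x i < b i)%R ->
     exists k, S k /\ forall i, (A k i <= x i < B k i)%R) ->
  (\prod_(i < d) (b i - a i))%:E <=
  \sum_(0 <= k <oo) (if S k then \prod_(i < d) (B k i - A k i) else 0)%:E.
Proof.
elim: d => [|d IH] a b A B S ab AB cov.
  have [k [Sk _]] := cov (fun _ => 0%R) (fun i => match i with Ordinal _ h => False_ind _ (notF h) end).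
  rewrite big_ord0; apply: le_trans (nneseries_lim_ge k.+1 _); last first.
    by move=> n _ _; case: (S n); rewrite lee_fin // prodr_ge0 // => i _; rewrite subr_ge0.
  rewrite big_nat_recr //= Sk big_ord0 leeDr // sume_ge0 // => n _.
  by case: (S n); rewrite lee_fin // prodr_ge0 // => i _; rewrite subr_ge0.
set V := (\prod_(i < d) (b (lift ord0 i) - a (lift ord0 i)))%R.
have V0 : (0 <= V)%R by rewrite prodr_ge0 // => i _; rewrite subr_ge0.
pose c k := (\prod_(i < d) (B k (lift ord0 i) - A k (lift ord0 i)))%R.
have c0 k : (0 <= c k)%R by rewrite prodr_ge0 // => i _; rewrite subr_ge0.
pose w k := if S k then c k else 0%R.
have w0 k : (0 <= w k)%R by rewrite /w; case: (S k).
pose g k t := ((w k * \1_(`[A k ord0, B k ord0[%classic) t)%R)%:E.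
have g0 k t : 0 <= g k t by rewrite /g lee_fin mulr_ge0 // indicE; case: (_ \in _).
rewrite big_ord_recl /=.
have -> : \sum_(0 <= k <oo) (if S k then \prod_(i < d.+1) (B k i - A k i) else 0)%:E
   = \sum_(0 <= k <oo) \int[@lebesgue_measure R]_(t in setT) g k t.
  apply: eq_eseriesr => k _; rewrite gk_int // big_ord_recl /w.
  by case: (S k); rewrite ?mul0r // mulrC.
rewrite -integral_nneseries //; last by move=> k; exact: gk_meas.
rewrite mulrC -(@gk_int V _ _ V0 (ab ord0)).
apply: ge0_le_integral => //.
- by move=> t _; rewrite lee_fin mulr_ge0 // indicE; case: (_ \in _).
- exact: gk_meas.
- apply: (ge0_emeasurable_sum (P := xpredT)) => // k _; exact: gk_meas.
move=> t _; rewrite indicE.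
case: (boolP (t \in _)) => [tI|_]; last by rewrite mulr0 nneseries_ge0.
rewrite mulr1.
pose A' k := if S k && (A k ord0 <= t < B k ord0)%R then (fun i => A k (lift ord0 i)) else (fun _ => 0%R).
pose B' k := if S k && (A k ord0 <= t < B k ord0)%R then (fun i => B k (lift ord0 i)) else (fun _ => 0%R).
have := IH (fun i => a (lift ord0 i)) (fun i => b (lift ord0 i)) A' B'
  (fun k => S k && (A k ord0 <= t < B k ord0)%R).
have tI' : (a ord0 <= t < b ord0)%R by move: tI => /set_mem; rewrite /= in_itv.
move=> /(_ (fun i => ab _)) H.
have H2 : forall (k : nat) (i : 'I_d), (A' k i <= B' k i)%R.
  by move=> k i; rewrite /A' /B'; case: ifP => _ //; exact: AB.
move: H => /(_ H2) H; clear H2.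
have H3 : forall y : 'I_d -> R,
    (forall i : 'I_d, (a (lift ord0 i) <= y i < b (lift ord0 i))%R) ->
    exists k : nat, ([&& S k, A k ord0 <= t & t < B k ord0])%R /\
      (forall i : 'I_d, (A' k i <= y i < B' k i)%R).
  move=> y yI; have [|k [Sk Hk]] := cov (joinv t y).
    by move=> j; case: (unliftP ord0 j) => [i ->|->]; rewrite ?joinvS ?joinv0.
  exists k; have H0 := Hk ord0; rewrite joinv0 in H0.
  rewrite /A' /B' Sk H0 /=; split => // i.
  by have := Hk (lift ord0 i); rewrite joinvS.
move: H => /(_ H3) H; clear H3.
apply: (le_trans H); rewrite le_eqVlt; apply/orP; left; apply/eqP.
apply: eq_eseriesr => k _; rewrite /g /w.
case Sk: (S k) => /=; last by rewrite mul0r.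
have [kI|kI] := boolP (A k ord0 <= t < B k ord0)%R.
  rewrite /A' /B' Sk kI /c indicE mem_set ?mulr1 //=; by rewrite in_itv.
rewrite indicE memNset ?mulr0 //=; by rewrite in_itv /=; apply/negP.
Qed.
End Cover.

Lemma seg_boundary (R : realType) d (E : set 'rV[R]_d) (x z : 'rV[R]_d) :
  E x -> ~ E z -> exists t : R, 0 <= t <= 1 /\ tboundary E (x + t *: (z - x)).
Proof.
move=> Ex nEz; apply: contrapT => nb.
pose p := fun t : R => x + t *: (z - x).
have pc : continuous p.
  move=> t; apply: cvgD; first exact: cvg_cst.
  apply: cvgZl; exact: cvg_id.
have C1 : connected (p @` `[0, 1]%classic).
  apply: connected_continuous_connected; first exact: segment_connected.
  exact: continuous_subspaceT.
have sep : separated (interior E) (~` closure E).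
  split.
    apply/seteqP; split => // y [cy ncy]; apply: ncy.
    move: cy; apply: closureS; exact: interior_subset.
  apply/seteqP; split => // y [iy cy].
  have [w [nw iw]] := cy _ (nbhs_interior iy).
  by apply: nw; apply: subset_closure; apply: interior_subset.
have sub : p @` `[0, 1]%classic `<=` interior E `|` ~` closure E.
  move=> _ [t t01 <-].
  have [ie|nie] := pselect (interior E (p t)); first by left.
  right => cl; apply: nb; exists t; split; last by split.
  by move: t01; rewrite /= in_itv.
have e1 : p 1 = z by rewrite /p scale1r addrCA subrr addr0.
have e0 : p 0 = x by rewrite /p scale0r addr0.
have i1 : `[0, 1]%classic (1 : R) by rewrite /= in_itv /= ler01 lexx.
have i0 : `[0, 1]%classic (0 : R) by rewrite /= in_itv /= ler01 lexx.
have [h|h] := connected_subset sep sub C1.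
  have : interior E z by rewrite -e1; apply: h; exists 1.
  by move/interior_subset.
have : (~` closure E) x by rewrite -e0; apply: h; exists 0.
by apply; apply: subset_closure.
Qed.

Section Eucl.
Variable R : realType.
Variable d : nat.
Implicit Types (x y z : 'rV[R]_d).

Lemma eucl_ge x y i : `|x ord0 i - y ord0 i| <= eucl x y.
Proof.
rewrite /eucl -sqrtr_sqr ler_sqrt; last by rewrite sumr_ge0 // => j _; rewrite sqr_ge0.
by rewrite (bigD1 i) //= lerDl sumr_ge0 // => j _; rewrite sqr_ge0.
Qed.

Lemma eucl_le x y (r : R) : 0 <= r -> (forall i, `|x ord0 i - y ord0 i| <= r) ->
  eucl x y <= d%:R * r.
Proof.
move=> r0 H; rewrite /eucl.
have -> : d%:R * r = Num.sqrt ((d%:R * r) ^+ 2).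
  by rewrite sqrtr_sqr ger0_norm // mulr_ge0.
rewrite ler_sqrt; last by rewrite sqr_ge0.
apply: (@le_trans _ _ (\sum_(j < d) r ^+ 2)).
  apply: ler_sum => j _; rewrite -real_normK ?num_real //.
  by rewrite lerXn2r // ?nnegrE // H.
rewrite sumr_const card_ord exprMn.
have hd : (d%:R : R) <= d%:R ^+ 2.
  by rewrite -natrX ler_nat; case: d => // n; rewrite expnS leq_pmulr // expn_gt0.
rewrite -[r ^+ 2 *+ d]mulr_natl; apply: ler_wpM2r => //; exact: sqr_ge0.
Qed.

Lemma edist_le x {F : set 'rV[R]_d} {w} : F w -> (Defs.edist x F <= (eucl x w)%:E)%E.
Proof. by move=> Fw; apply: ereal_inf_lbound; exists w. Qed.

Lemma edist_lt x (F : set 'rV[R]_d) (e : R) : (Defs.edist x F < e%:E)%E ->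
  exists2 w, F w & eucl x w < e.
Proof.
move=> /ereal_inf_lt [_ [w Fw <-]]; rewrite lte_fin => h; by exists w.
Qed.

Lemma hausdorff_le (A B : set 'rV[R]_d) (e : R) : 0 <= e ->
  (forall x, A x -> exists2 w, B w & eucl x w <= e) ->
  (forall x, B x -> exists2 w, A w & eucl x w <= e) ->
  (hausdorff A B <= e%:E)%E.
Proof.
move=> e0 hA hB; rewrite /hausdorff !ge_max lee_fin e0 /=.
apply/andP; split; apply: ge_ereal_sup => _ [x Ax <-].
  by have [w Bw le] := hA x Ax; apply: le_trans (edist_le x Bw) _; rewrite lee_fin.
by have [w Bw le] := hB x Ax; apply: le_trans (edist_le x Bw) _; rewrite lee_fin.
Qed.

Lemma hausdorff_lt1 (A B : set 'rV[R]_d) (e : R) :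
  (hausdorff A B < e%:E)%E -> forall x, A x -> exists2 w, B w & eucl x w < e.
Proof.
move=> h x Ax; apply: edist_lt; apply: le_lt_trans h.
rewrite /hausdorff le_max; apply/orP; right; rewrite le_max; apply/orP; left.
by apply: ereal_sup_ubound; exists x.
Qed.

Lemma hausdorff_lt2 (A B : set 'rV[R]_d) (e : R) :
  (hausdorff A B < e%:E)%E -> forall x, B x -> exists2 w, A w & eucl x w < e.
Proof.
move=> h x Ax; apply: edist_lt; apply: le_lt_trans h.
rewrite /hausdorff le_max; apply/orP; right; rewrite le_max; apply/orP; right.
by apply: ereal_sup_ubound; exists x.
Qed.
End Eucl.

Section CA.
Variable R : realType.
Variable d : nat.
Lemma closure_approx (C : set 'rV[R]_d) y (e : R) : closure C y -> 0 < e ->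
  exists w, C w /\ forall i, `|y ord0 i - w ord0 i| < e.
Proof.
move=> cy e0; have := cy _ (nbhsx_ballx y e e0).
move=> [w [Cw bw]]; exists w; split => // i.
move: bw; rewrite /ball /= => -[_ /(_ ord0 i)].
by rewrite /ball /=.
Qed.

End CA.
Arguments eucl_le {R d x y r}.
Arguments seg_boundary {R d E x z}.
Arguments eucl_ge {R d x y}.
Arguments closure_approx {R d C y e}.
Arguments hausdorff_le {R d A B e}.
Arguments hausdorff_lt1 {R d A B e}.
Arguments hausdorff_lt2 {R d A B e}.

Lemma outer_ge (R : realType) d (a b : 'rV[R]_d) (S : set 'rV[R]_d) :
  (forall i, a ord0 i <= b ord0 i) -> box a b `<=` S ->
  ((box_vol a b)%:E <= lebesgue_outer S)%E.
Proof.
move=> ab sub; apply/ereal_infP => _ [A [B [AB cov ->]]].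
apply: (@cover_vol R d (fun i => a ord0 i) (fun i => b ord0 i)
  (fun k i => A k ord0 i) (fun k i => B k ord0 i) (fun _ => true)) => //.
move=> x xb; have bx : box a b (\row_i x i) by move=> i; rewrite mxE; exact: xb.
have [k _ hk] := cov _ (sub _ bx).
by exists k; split => // i; have := hk i; rewrite mxE.
Qed.

Lemma outer_le (R : realType) d (S T : set 'rV[R]_d) : S `<=` T ->
  (lebesgue_outer S <= lebesgue_outer T)%E.
Proof.
move=> ST; apply/ereal_infP => _ [A [B [AB cov ->]]].
apply: ereal_inf_lbound; exists A, B; split => //; exact: subset_trans cov.
Qed.

Lemma key (R : realType) d (A C : set 'rV[R]_d) (e r h : R) :
  0 < r -> 0 < h -> d%:R * (r + h + h) <= e ->
  (lebesgue_outer (A `\` C) < ((r + r) ^+ d)%:E)%E ->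
  (forall y, tboundary A y -> exists2 y', tboundary C y' & eucl y y' < h) ->
  forall x, A x -> exists2 w, C w & eucl x w <= e.
Proof.
move=> r0 h0 de mA bd x Ax.
apply: contrapT => nw.
have far : forall w, C w -> e < eucl x w.
  by move=> w Cw; rewrite ltNge; apply/negP => le; apply: nw; exists w.
pose a : 'rV[R]_d := \row_i (x ord0 i - r).
pose b : 'rV[R]_d := \row_i (x ord0 i + r).
have ab : forall i, a ord0 i <= b ord0 i by move=> i; rewrite !mxE; lra.
have inbox : forall w, box a b w -> forall i, `|x ord0 i - w ord0 i| <= r.
  move=> w /(_ _) bw i; have := bw i; rewrite !mxE => /andP [h1 h2].
  by rewrite ler_norml; apply/andP; split; lra.
have dr : d%:R * r <= e.
  apply: le_trans de; apply: ler_wpM2l => //; lra.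
have [sub|nsub] := pselect (box a b `<=` A).
  have : ((box_vol a b)%:E <= lebesgue_outer (A `\` C))%E.
    apply: outer_ge => // w bw; split; first exact: sub.
    move=> Cw; have := far w Cw; apply/negP; rewrite -leNgt.
    exact: le_trans (eucl_le (ltW r0) (inbox w bw)) dr.
  rewrite /box_vol.
  have -> : \prod_(i < d) (b ord0 i - a ord0 i) = \prod_(i < d) (r + r).
    by apply: eq_bigr => i _; rewrite !mxE; lra.
  rewrite prodr_const card_ord => le.
  by have := lt_le_trans mA le; rewrite ltxx.
have [z [bz nAz]] : exists z, box a b z /\ ~ A z.
  apply: contrapT => H; apply: nsub => w bw; apply: contrapT => nA.
  by apply: H; exists w.
have [t [t01 bdy]] := seg_boundary Ax nAz.
have [y' by' yy'] := bd _ bdy.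
case: by' => cy' _.
have [w [Cw wy]] := closure_approx cy' h0.
have := far w Cw; apply/negP; rewrite -leNgt.
apply: le_trans de; apply: eucl_le; first lra.
move=> i.
have := le_lt_trans (eucl_ge i) yy'; rewrite !mxE ltr_norml => /andP [h1 h2].
have := wy i; rewrite ltr_norml => /andP [h3 h4].
have := bz i; rewrite !mxE => /andP [h5 h6].
case/andP: t01 => t0 t1.
rewrite ler_norml; apply/andP; split; nra.
Qed.
Arguments key {R d A C e r h}.

Lemma ev_lt {R : realType} {f : nat -> \bar R} {V : R} : 0 < V ->
  f @ \oo --> 0%E -> \forall n \near \oo, (f n < V%:E)%E.
Proof.
move=> V0 /fine_cvgP [hfin hcv].
move/cvgrPdist_lt: hcv => /(_ V V0) hlt.
apply: (filterS2 _ _ hfin hlt) => n fn; rewrite sub0r normrN => lt.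
by rewrite -(fineK fn) lte_fin; apply: le_lt_trans lt; exact: ler_norm.
Qed.

Theorem proposition2p5 (R : realType) (d : nat)
  (E : nat -> set 'rV[R]_d) (E0 : set 'rV[R]_d) :
  (forall n, leb_measurable (E n)) -> leb_measurable E0 ->
  (fun n => lebesgue_outer (symdiff (E n) E0)) @ \oo --> 0%E ->
  (fun n => hausdorff (tboundary (E n)) (tboundary E0)) @ \oo --> 0%E ->
  (fun n => hausdorff (E n) E0) @ \oo --> 0%E.
Proof.
move=> _ _ hm hb.
have core : forall eps : R, 0 < eps ->
    \forall n \near \oo, (hausdorff (E n) E0 <= eps%:E)%E.
  move=> eps e0.
  pose r := eps / (3 * (d%:R + 1)).
  have r0 : 0 < r by rewrite divr_gt0 // mulr_gt0 // ltr_wpDl.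
  have de : d%:R * (r + r + r) <= eps.
    have -> : d%:R * (r + r + r) = eps * (d%:R / (d%:R + 1)).
      by rewrite /r; field; rewrite lt0r_neq0 // ltr_wpDl.
    rewrite ler_piMr ?(ltW e0) // ler_pdivrMr ?ltr_wpDl // mul1r lerDl //.
  have V0 : 0 < (r + r) ^+ d by rewrite exprn_gt0 // addr_gt0.
  have H1 := ev_lt V0 hm.
  have H2 := ev_lt r0 hb.
  apply: (filterS2 _ _ H1 H2) => n h1 h2.
  apply: hausdorff_le (ltW e0) _ _.
  - apply: (key r0 r0 de) => //.
      apply: le_lt_trans h1; apply: outer_le => y yA; by left.
    exact: hausdorff_lt1 h2.
  - apply: (key r0 r0 de) => //.
      apply: le_lt_trans h1; apply: outer_le => y yA; by right.
    exact: hausdorff_lt2 h2.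
have f0 n : (0 <= hausdorff (E n) E0)%E by rewrite /hausdorff le_max lexx.
apply/fine_cvgP; split.
  apply: filterS (core 1 ltr01) => n h.
  by rewrite ge0_fin_numE // (le_lt_trans h) // ltry.
apply/cvgrPdist_le => eps e0.
apply: filterS (core eps e0) => n /=.
have := f0 n; case: (hausdorff (E n) E0) => [x||] //=.
by rewrite !lee_fin sub0r normrN => x0 xe; rewrite ger0_norm.
Qed.
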